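(* Let $\{\omega_n\}_{n\ge0}$ be a sequence of real numbers whose projection $\{\omega_n \bmod 1\}_{n\ge0}$ to $\mathbb{T}$ has the repetition property, and suppose there exist an integer $k\ge1$ and integers $a_1,\ldots,a_k$ with $|a_k|=1$ such that $$\omega_n + a_1\omega_{n-1}+a_2\omega_{n-2}+\cdots+a_k\omega_{n-k}=0 \quad\text{for all } n\ge k.$$ Then for every $r\in\mathbb{Q}$, the projection $\{r\omega_n \bmod 1\}_{n\ge0}$ to $\mathbb{T}$ has the repetition property, and it has the joint repetition property with $\{\omega_n \bmod 1\}_{n\ge0}$.
   Context: $\mathbb{T}=\mathbb{R}/\mathbb{Z}$ with metric $\mathrm{dist}(x,y)=\langle x-y\rangle$, where $\langle\tau\rangle=\min\{|\hat\tau-p|:p\in\mathbb{Z}\}$ for any representative $\hat\tau\in\mathbb{R}$ of $\tau$. $\mathbb{Z}_+=\{1,2,\ldots\}$. A sequence $\{\omega_n\}_{n\ge0}$ in a metric space $\Omega$ has the repetition property if for every $\varepsilon>0$ and $r \in \mathbb{Z}_+$ there exists $q \in \mathbb{Z}_+$ such that $\mathrm{dist}(\omega_n,\omega_{n+q}) < \varepsilon$ for $n = 0,1,\ldots, rq$. A family of sequences has the joint repetition property if each of them has the repetition property and, for each finite subfamily and each $\varepsilon>0$, $r\in\mathbb{Z}_+$, a single $q\in\mathbb{Z}_+$ can be chosen that works simultaneously for all sequences in the subfamily. *)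

(* Defs.v *)
From Stdlib Require Import Reals QArith Qreals ZArith Lia Lra.
Open Scope R_scope.

(* <t> = distance from t to the nearest integer = min(frac t, 1 - frac t). *)
Definition tnorm (t : R) : R := Rmin (frac_part t) (1 - frac_part t).

Definition tdist (x y : R) : R := tnorm (x - y).

Definition rep_prop (w : nat -> R) : Prop :=
  forall (eps : R) (r : nat), 0 < eps -> (1 <= r)%nat ->
    exists q : nat, (1 <= q)%nat /\
      forall n : nat, (n <= r * q)%nat -> tdist (w n) (w (n + q)%nat) < eps.

Definition joint_rep_prop (F : list (nat -> R)) : Prop :=
  (forall w, List.In w F -> rep_prop w) /\
  (forall G : list (nat -> R), (forall w, List.In w G -> List.In w F) ->
    forall (eps : R) (r : nat), 0 < eps -> (1 <= r)%nat ->
      exists q : nat, (1 <= q)%nat /\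
        forall w, List.In w G ->
          forall n : nat, (n <= r * q)%nat -> tdist (w n) (w (n + q)%nat) < eps).

(* Main.v *)
Require Import Defs.
From Stdlib Require Import Reals QArith Qreals ZArith Lia Lra Psatz Classical.
Open Scope R_scope.

Lemma frac_bounds t : 0 <= t - IZR (Int_part t) < 1.
Proof. destruct (base_Int_part t). lra. Qed.

Lemma tnorm_le t c : tnorm t <= Rabs (t - IZR c).
Proof.
  unfold tnorm, frac_part. pose proof (frac_bounds t) as [H1 H2].
  destruct (Z_le_gt_dec 0 (Int_part t - c)) as [Hd|Hd].
  - apply IZR_le in Hd. rewrite minus_IZR in Hd.
    apply Rle_trans with (t - IZR (Int_part t)). apply Rmin_l.
    rewrite Rabs_right; lra.
  - assert (Hd' : (Int_part t - c <= -1)%Z) by lia. apply IZR_le in Hd'. rewrite minus_IZR in Hd'.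
    apply Rle_trans with (1 - (t - IZR (Int_part t))). apply Rmin_r.
    rewrite Rabs_left; lra.
Qed.

Lemma tnorm_near t d : tnorm t < d -> exists c, Rabs (t - IZR c) < d.
Proof.
  unfold tnorm, frac_part. pose proof (frac_bounds t) as [H1 H2].
  unfold Rmin. destruct (Rle_dec _ _) as [H|H]; intro Hlt.
  - exists (Int_part t). rewrite Rabs_right; lra.
  - exists (Int_part t + 1)%Z. rewrite plus_IZR. rewrite Rabs_left; lra.
Qed.

Definition rnd (x : R) : Z := Int_part (x + /2).
Lemma rnd_spec x c d : Rabs (x - IZR c) < d -> d <= /2 -> Rabs (x - IZR (rnd x)) < d.
Proof.
  intros H Hd. unfold rnd. destruct (base_Int_part (x + /2)) as [B1 B2].
  assert (Int_part (x + /2) = c).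
  { apply Rabs_def2 in H. destruct H.
    assert (IZR (Int_part (x + /2) - c) < IZR 1) by (rewrite minus_IZR; lra).
    assert (IZR (-1) < IZR (Int_part (x + /2) - c)) by (rewrite minus_IZR; lra).
    apply lt_IZR in H1. apply lt_IZR in H2. lia. }
  rewrite H0. exact H.
Qed.

Fixpoint sumZ (f : nat -> Z) (n : nat) : Z :=
  match n with O => f O | S n' => (sumZ f n' + f (S n'))%Z end.
Fixpoint sumN (f : nat -> Z) (c : nat) : Z :=
  match c with O => 0%Z | S c' => (sumN f c' + f c')%Z end.

Lemma sumZ_IZR f n : IZR (sumZ f n) = sum_f_R0 (fun i => IZR (f i)) n.
Proof. induction n; simpl; [reflexivity| rewrite plus_IZR, IHn; reflexivity]. Qed.
Lemma sumZ_N f n : sumZ f n = (sumN f n + f n)%Z.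
Proof. induction n; simpl; [lia| rewrite IHn; lia]. Qed.
Lemma sumN_div m f c : (forall u, (u < c)%nat -> (m | f u)%Z) -> (m | sumN f c)%Z.
Proof. induction c; intros H; simpl. apply Z.divide_0_r.
  apply Z.divide_add_r; [apply IHc; intros; apply H; lia | apply H; lia]. Qed.
Lemma sumN_ext f g c : (forall u, (u < c)%nat -> f u = g u) -> sumN f c = sumN g c.
Proof. induction c; intros H; simpl. reflexivity. rewrite IHc, H; auto; intros; apply H; lia. Qed.
Lemma sumN_minus f g c : sumN (fun u => f u - g u)%Z c = (sumN f c - sumN g c)%Z.
Proof. induction c; simpl. reflexivity. rewrite IHc; lia. Qed.
Lemma sumN_const m G c : (forall s, (s < c)%nat -> (m | G s - G O)%Z) ->
  (m | sumN G c - Z.of_nat c * G O)%Z.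
Proof. induction c; intros H; cbn [sumN]. simpl. apply Z.divide_0_r.
  rewrite Nat2Z.inj_succ.
  replace (sumN G c + G c - Z.succ (Z.of_nat c) * G O)%Z with ((sumN G c - Z.of_nat c * G O) + (G c - G O))%Z by lia.
  apply Z.divide_add_r; [apply IHc; intros; apply H; lia | apply H; lia]. Qed.

Lemma tele (F : nat -> R) (G : nat -> Z) d c :
  (forall u, (u < c)%nat -> Rabs (F u - F (S u) - IZR (G u)) <= d) ->
  Rabs (F O - F c - IZR (sumN G c)) <= INR c * d.
Proof.
  induction c; intros H; cbn [sumN].
  - simpl. replace (F O - F O - 0) with 0 by ring. rewrite Rabs_R0. lra.
  - rewrite plus_IZR. rewrite S_INR.
    replace (F O - F (S c) - (IZR (sumN G c) + IZR (G c)))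
      with ((F O - F c - IZR (sumN G c)) + (F c - F (S c) - IZR (G c))) by ring.
    eapply Rle_trans. apply Rabs_triang.
    assert (Rabs (F O - F c - IZR (sumN G c)) <= INR c * d) by (apply IHc; intros; apply H; lia).
    assert (Rabs (F c - F (S c) - IZR (G c)) <= d) by (apply H; lia). lra.
Qed.

Lemma pigeon (M : nat) : forall (c : nat -> nat), (forall j, (j <= M)%nat -> (c j < M)%nat) ->
  exists i j, (i < j <= M)%nat /\ c i = c j.
Proof.
  induction M; intros c H.
  - specialize (H O (le_n _)). lia.
  - destruct (classic (exists i, (i <= M)%nat /\ c i = c (S M))) as [[i [Hi E]]|Hn].
    + exists i, (S M). split; [lia|auto].
    + destruct (IHM (fun x => if Nat.ltb (c (S M)) (c x) then (c x - 1)%nat else c x)) as [i [j [Hij E]]].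
      * intros x Hx. assert (c x <> c (S M)) by (intro; apply Hn; eauto).
        pose proof (H x ltac:(lia)). pose proof (H (S M) ltac:(lia)).
        destruct (Nat.ltb_spec (c (S M)) (c x)); lia.
      * assert (c i <> c (S M)) by (intro; apply Hn; exists i; split; [lia|auto]).
        assert (c j <> c (S M)) by (intro; apply Hn; exists j; split; [lia|auto]).
        exists i, j. split; [lia|].
        destruct (Nat.ltb_spec (c (S M)) (c i)); destruct (Nat.ltb_spec (c (S M)) (c j)); lia.
Qed.

Fixpoint code (m : Z) (k : nat) (f : nat -> Z) : Z :=
  match k with O => 0%Z | S k' => (f O mod m + m * code m k' (fun i => f (S i)))%Z end.

Lemma code_bound m k : (0 < m)%Z -> forall f, (0 <= code m k f < m ^ Z.of_nat k)%Z.
Proof. intros Hm. induction k; intros f; cbn [code].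
  - simpl. lia.
  - rewrite Nat2Z.inj_succ, Z.pow_succ_r by lia. specialize (IHk (fun i => f (S i))).
    pose proof (Z.mod_pos_bound (f O) m Hm). nia.
Qed.

Lemma code_inj m k : (0 < m)%Z -> forall f g, code m k f = code m k g ->
  forall i, (i < k)%nat -> (f i mod m = g i mod m)%Z.
Proof. intros Hm. induction k; intros f g H i Hi; [lia|].
  cbn [code] in H. pose proof (Z.mod_pos_bound (f O) m Hm). pose proof (Z.mod_pos_bound (g O) m Hm).
  assert (Hc : code m k (fun i => f (S i)) = code m k (fun i => g (S i))) by nia.
  destruct i. nia. apply (IHk _ _ Hc i). lia.
Qed.

Lemma mod_eq_div m a b : (0 < m)%Z -> (a mod m = b mod m)%Z -> (m | a - b)%Z.
Proof. intros Hm H. apply Z.mod_divide; [lia|]. rewrite Zminus_mod, H, Z.sub_diag. apply Z.mod_0_l. lia. Qed.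

Lemma window (k : nat) (a : nat -> Z) (m : Z) (y : nat -> Z) (N s : nat) :
  (1 <= k)%nat -> Z.abs (a k) = 1%Z ->
  (forall t, (k <= t <= N)%nat ->
     (y t + sumN (fun i => a (S i) * y (t - S i)%nat) (k-1) + a k * y (t - k)%nat = 0)%Z) ->
  (s + k <= N + 1)%nat ->
  (forall i, (i < k)%nat -> (m | y (s + i)%nat)%Z) ->
  forall n, (n <= N)%nat -> (m | y n)%Z.
Proof.
  intros Hk Ha Hrec Hs Hw.
  assert (Fw : forall n, (s <= n <= N)%nat -> (m | y n)%Z).
  { intro n. induction n as [n IH] using (well_founded_induction lt_wf). intros Hn.
    destruct (Nat.lt_ge_cases n (s + k)) as [H1|H1].
    - replace n with (s + (n - s))%nat by lia. apply Hw. lia.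
    - pose proof (Hrec n ltac:(lia)) as E.
      assert (D1 : (m | sumN (fun i => a (S i) * y (n - S i)%nat) (k-1))%Z).
      { apply sumN_div. intros u Hu. apply Z.divide_mul_r. apply IH; lia. }
      assert (D2 : (m | a k * y (n - k)%nat)%Z).
      { apply Z.divide_mul_r. apply IH; lia. }
      replace (y n) with (- (sumN (fun i => a (S i) * y (n - S i)%nat) (k-1) + a k * y (n - k)%nat))%Z by lia.
      apply Z.divide_opp_r. apply Z.divide_add_r; auto. }
  assert (Bw : forall d n, (n <= N)%nat -> (s - n = d)%nat -> (m | y n)%Z).
  { intro d. induction d as [d IH] using (well_founded_induction lt_wf). intros n Hn Hd.
    destruct (Nat.le_gt_cases s n) as [H1|H1]. apply Fw; lia.
    assert (G : forall x, (n < x <= n + k)%nat -> (m | y x)%Z).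
    { intros x Hx. destruct (Nat.le_gt_cases s x). apply Fw; lia. apply (IH (s - x)%nat); lia. }
    pose proof (Hrec (n + k)%nat ltac:(lia)) as E.
    replace (n + k - k)%nat with n in E by lia.
    assert (D1 : (m | sumN (fun i => a (S i) * y (n + k - S i)%nat) (k-1))%Z).
    { apply sumN_div. intros u Hu. apply Z.divide_mul_r. apply G; lia. }
    assert (D0 : (m | y (n + k)%nat)%Z) by (apply G; lia).
    assert (Hak : a k = 1%Z \/ a k = (-1)%Z) by lia.
    destruct D1 as [c1 Hc1]. destruct D0 as [c0 Hc0].
    destruct Hak as [Hak|Hak]; rewrite Hak in E.
    - exists (- c1 - c0)%Z. lia.
    - exists (c1 + c0)%Z. lia. }
  intros n Hn. apply (Bw (s - n)%nat); auto.
Qed.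

Lemma key (w : nat -> R) (k : nat) (a : nat -> Z) (p : Z) (m : positive) :
  rep_prop w -> (1 <= k)%nat -> Z.abs (a k) = 1%Z ->
  (forall n, (k <= n)%nat -> w n + sum_f_R0 (fun i => IZR (a (S i)) * w (n - S i)%nat) (k - 1) = 0) ->
  forall eps R0, 0 < eps -> (1 <= R0)%nat ->
  exists q, (1 <= q)%nat /\ forall n, (n <= R0 * q)%nat ->
    tdist (w n) (w (n+q)%nat) < eps /\
    tdist (IZR p * / IZR (Zpos m) * w n) (IZR p * / IZR (Zpos m) * w (n+q)%nat) < eps.
Proof.
  intros Hw Hk Ha Hrec eps R0 Heps HR0.
  set (mZ := Zpos m). set (mn := Pos.to_nat m).
  assert (HmZ : mZ = Z.of_nat mn) by (unfold mZ, mn; lia).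
  assert (Hmn : (1 <= mn)%nat) by (unfold mn; lia).
  set (M := Z.to_nat (mZ ^ Z.of_nat k)).
  assert (Hpow : (0 < mZ ^ Z.of_nat k)%Z) by (apply Z.pow_pos_nonneg; lia).
  assert (HM : Z.of_nat M = (mZ ^ Z.of_nat k)%Z) by (apply Z2Nat.id; lia).
  assert (HM1 : (1 <= M)%nat) by lia.
  set (Sa := sum_f_R0 (fun i => Rabs (IZR (a (S i)))) (k-1)).
  assert (HSa : 0 <= Sa) by (apply cond_pos_sum; intros; apply Rabs_pos).
  set (rr := Rabs (IZR p * / IZR mZ)).
  assert (Hrr : 0 <= rr) by apply Rabs_pos.
  set (C := INR mn * INR M).
  assert (HC : 1 <= C).
  { unfold C. assert (1 <= INR mn) by (apply (le_INR 1); lia).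
    assert (1 <= INR M) by (apply (le_INR 1); lia). nra. }
  set (del := Rmin (/ (2 * (1 + Sa))) (eps / (2 * C * (1 + rr)))).
  assert (Hd0 : 0 < del).
  { apply Rmin_glb_lt. apply Rinv_0_lt_compat; lra.
    apply Rdiv_lt_0_compat; [lra|]. nra. }
  assert (Hd1 : del * (1 + Sa) <= /2).
  { apply Rle_trans with (/ (2 * (1 + Sa)) * (1 + Sa)).
    apply Rmult_le_compat_r; [lra| apply Rmin_l]. right; field; lra. }
  assert (Hd2 : del <= /2) by nra.
  assert (Hd5 : del * (2 * C * (1 + rr)) <= eps).
  { apply Rle_trans with (eps / (2 * C * (1 + rr)) * (2 * C * (1 + rr))).
    apply Rmult_le_compat_r; [nra| apply Rmin_r]. right; field; nra. }
  assert (Hd3 : C * del < eps) by nra.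
  assert (Hd4 : rr * (C * del) < eps) by nra.
  set (R' := (R0 * mn * M + mn * M + 2 * M + k)%nat).
  destruct (Hw del R' Hd0 ltac:(unfold R'; lia)) as [q [Hq Hqw]].
  set (z := fun n => rnd (w n - w (n + q)%nat)).
  assert (Hz : forall n, (n <= R' * q)%nat -> Rabs (w n - w (n + q)%nat - IZR (z n)) < del).
  { intros n Hn. destruct (tnorm_near _ _ (Hqw n Hn)) as [c Hc]. apply (rnd_spec _ c); auto. }
  assert (Hzr : forall t, (k <= t <= R' * q)%nat ->
     (z t + sumN (fun i => a (S i) * z (t - S i)%nat) (k-1) + a k * z (t - k)%nat = 0)%Z).
  { intros t Ht.
    assert (E0 : (z t + sumZ (fun i => a (S i) * z (t - S i)%nat) (k-1) = 0)%Z).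
    { assert (HD : (w t - w (t + q)%nat) + sum_f_R0 (fun i => IZR (a (S i)) *
                    (w (t - S i)%nat - w (t - S i + q)%nat)) (k-1) = 0).
      { rewrite (sum_eq _ (fun i => IZR (a (S i)) * w (t - S i)%nat - IZR (a (S i)) * w (t + q - S i)%nat)).
        2:{ intros i Hi. replace (t + q - S i)%nat with (t - S i + q)%nat by lia. ring. }
        rewrite minus_sum. pose proof (Hrec t ltac:(lia)). pose proof (Hrec (t+q)%nat ltac:(lia)). lra. }
      set (E := (w t - w (t + q)%nat - IZR (z t)) + sum_f_R0 (fun i => IZR (a (S i)) *
                    (w (t - S i)%nat - w (t - S i + q)%nat - IZR (z (t - S i)%nat))) (k-1)).
      assert (HX : IZR ((z t + sumZ (fun i => a (S i) * z (t - S i)%nat) (k-1))%Z) = - E).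
      { rewrite plus_IZR, sumZ_IZR. unfold E.
        rewrite (sum_eq (fun i => IZR (a (S i)) * (w (t - S i)%nat - w (t - S i + q)%nat - IZR (z (t - S i)%nat)))
           (fun i => IZR (a (S i)) * (w (t - S i)%nat - w (t - S i + q)%nat) - IZR ((a (S i) * z (t - S i)%nat)%Z))).
        2:{ intros i Hi. rewrite mult_IZR. ring. }
        rewrite minus_sum. lra. }
      assert (HE : Rabs E < 1).
      { unfold E. eapply Rle_lt_trans. apply Rabs_triang.
        assert (Rabs (sum_f_R0 (fun i => IZR (a (S i)) * (w (t - S i)%nat - w (t - S i + q)%nat - IZR (z (t - S i)%nat))) (k-1)) <= Sa * del).
        { eapply Rle_trans. apply Rsum_abs. unfold Sa. rewrite Rmult_comm, scal_sum.
          apply sum_Rle. intros i Hi. rewrite Rabs_mult. apply Rmult_le_compat_l. apply Rabs_pos.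
          apply Rlt_le. apply Hz. lia. }
        pose proof (Hz t ltac:(lia)). nra. }
      apply Rabs_def2 in HE. destruct HE as [HE1 HE2].
      assert (IZR ((z t + sumZ (fun i => a (S i) * z (t - S i)%nat) (k-1))%Z) < IZR 1) by (rewrite HX; lra).
      assert (IZR (-1) < IZR ((z t + sumZ (fun i => a (S i) * z (t - S i)%nat) (k-1))%Z)) by (rewrite HX; lra).
      apply lt_IZR in H. apply lt_IZR in H0. lia. }
    rewrite sumZ_N in E0. cbv beta in E0. replace (S (k-1)) with k in E0 by lia. lia. }
  set (cd := fun j => Z.to_nat (code mZ k (fun t => z (j * q + t)%nat))).
  destruct (pigeon M cd) as [i [j [Hij Hc]]].
  { intros j Hj. unfold cd. pose proof (code_bound mZ k ltac:(lia) (fun t => z (j*q+t)%nat)). lia. }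
  assert (Hcode : code mZ k (fun t => z (i*q+t)%nat) = code mZ k (fun t => z (j*q+t)%nat)).
  { unfold cd in Hc. pose proof (code_bound mZ k ltac:(lia) (fun t => z (j*q+t)%nat)).
    pose proof (code_bound mZ k ltac:(lia) (fun t => z (i*q+t)%nat)).
    apply Z2Nat.inj; [lia|lia|exact Hc]. }
  set (L := (j - i)%nat).
  assert (HjL : j = (i + L)%nat) by (unfold L; lia).
  assert (HL1 : (1 <= L)%nat) by (unfold L; lia).
  assert (HLM : (L <= M)%nat) by (unfold L; lia).
  assert (HLq : (L * q <= M * q)%nat) by (apply Nat.mul_le_mono_r; lia).
  assert (Hkq : (k <= k * q)%nat) by nia.
  assert (HjM : (j * q <= M * q)%nat) by (apply Nat.mul_le_mono_r; lia).
  assert (HR'q : (R' * q = R0 * mn * M * q + mn * M * q + 2 * M * q + k * q)%nat) by (unfold R'; ring).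
  set (N2 := (R' * q - L * q)%nat).
  assert (Hper : forall x, (x <= N2)%nat -> (mZ | z x - z (x + L*q)%nat)%Z).
  { apply (window k a mZ (fun n => z n - z (n + L*q)%nat)%Z N2 (i * q)); auto.
    - intros t Ht. cbv beta.
      pose proof (Hzr t ltac:(unfold N2 in *; lia)) as E1.
      pose proof (Hzr (t + L*q)%nat ltac:(unfold N2 in *; lia)) as E2.
      rewrite (sumN_ext _ (fun i => a (S i) * z (t - S i)%nat - a (S i) * z (t + L*q - S i)%nat)%Z).
      2:{ intros u Hu. replace (t - S u + L*q)%nat with (t + L*q - S u)%nat by lia. ring. }
      rewrite sumN_minus. replace (t - k + L*q)%nat with (t + L*q - k)%nat by lia.
      rewrite Z.mul_sub_distr_l. lia.
    - unfold N2. rewrite HjL in HjM. lia.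
    - intros t Ht. replace (i*q+t + L*q)%nat with (j*q+t)%nat by (rewrite HjL; lia).
      apply mod_eq_div. lia. apply (code_inj mZ k ltac:(lia) _ _ Hcode t Ht). }
  set (P := (L * q)%nat).
  set (Zp := fun x => sumN (fun u => z (x + u * q)%nat) L).
  assert (B1 : forall x, (x + L * q <= R' * q)%nat -> Rabs (w x - w (x + P)%nat - IZR (Zp x)) <= INR L * del).
  { intros x Hx. pose proof (tele (fun u => w (x + u*q)%nat) (fun u => z (x + u*q)%nat) del L) as T.
    cbv beta in T. replace (x + 0*q)%nat with x in T by lia.
    apply T. intros u Hu. replace (x + S u * q)%nat with (x + u*q + q)%nat by lia.
    apply Rlt_le. apply Hz.
    assert (u * q <= L * q)%nat by (apply Nat.mul_le_mono_r; lia). lia. }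
  assert (P1 : forall x, (x + L*q <= N2)%nat -> (mZ | Zp (x + P)%nat - Zp x)%Z).
  { intros x Hx. unfold Zp. rewrite <- sumN_minus. apply sumN_div. intros u Hu. cbv beta.
    replace (x + P + u*q)%nat with (x + u*q + L*q)%nat by (unfold P; lia).
    replace (z (x+u*q+L*q)%nat - z(x+u*q)%nat)%Z with (- (z (x+u*q)%nat - z (x+u*q+L*q)%nat))%Z by lia.
    apply Z.divide_opp_r. apply Hper.
    assert (u * q <= L * q)%nat by (apply Nat.mul_le_mono_r; lia). lia. }
  assert (HPM : (P <= M * q)%nat) by exact HLq.
  exists (mn * P)%nat. split. { unfold P. nia. }
  intros n Hn.
  assert (Fn : (n <= R0 * mn * M * q)%nat).
  { assert (R0 * (mn * P) <= R0 * (mn * (M * q)))%nat.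
    { apply Nat.mul_le_mono_l. apply Nat.mul_le_mono_l. exact HPM. } lia. }
  set (G := fun s => Zp (n + s * P)%nat).
  assert (B2 : Rabs (w n - w (n + mn*P)%nat - IZR (sumN G mn)) <= INR mn * (INR L * del)).
  { pose proof (tele (fun s => w (n + s*P)%nat) G (INR L * del) mn) as T. cbv beta in T.
    replace (n + 0*P)%nat with n in T by lia. apply T. intros s Hs.
    replace (n + S s * P)%nat with (n + s*P + P)%nat by lia. unfold G. apply B1.
    assert (S s * P <= mn * (M * q))%nat.
    { apply Nat.le_trans with (mn * P)%nat. apply Nat.mul_le_mono_r; lia. apply Nat.mul_le_mono_l; exact HPM. }
    fold P. lia. }
  assert (Dv : (mZ | sumN G mn)%Z).
  { assert (Hg : forall s, (s < mn)%nat -> (mZ | G s - G O)%Z).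
    { induction s; intros Hs. rewrite Z.sub_diag. apply Z.divide_0_r.
      replace (G (S s) - G O)%Z with ((G (S s) - G s) + (G s - G O))%Z by lia.
      apply Z.divide_add_r; [|apply IHs; lia]. unfold G.
      replace (n + S s * P)%nat with (n + s*P + P)%nat by lia. apply P1.
      assert (S (S s) * P <= S mn * (M * q))%nat.
      { apply Nat.le_trans with (S mn * P)%nat. apply Nat.mul_le_mono_r; lia. apply Nat.mul_le_mono_l; exact HPM. }
      unfold N2. fold P. lia. }
    pose proof (sumN_const mZ G mn Hg) as H. rewrite <- HmZ in H.
    replace (sumN G mn) with ((sumN G mn - mZ * G O) + mZ * G O)%Z by ring.
    apply Z.divide_add_r; auto. apply Z.divide_factor_l. }
  destruct Dv as [K HK].
  assert (HE : INR mn * (INR L * del) <= C * del).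
  { unfold C. assert (INR L <= INR M) by (apply le_INR; lia).
    rewrite Rmult_assoc. apply Rmult_le_compat_l. apply pos_INR. apply Rmult_le_compat_r; lra. }
  split.
  - unfold tdist. eapply Rle_lt_trans. apply (tnorm_le _ (sumN G mn)). lra.
  - unfold tdist. eapply Rle_lt_trans. apply (tnorm_le _ (p * K)).
    replace (IZR p * / IZR mZ * w n - IZR p * / IZR mZ * w (n + mn * P)%nat - IZR (p * K))
      with (IZR p * / IZR mZ * (w n - w (n + mn * P)%nat - IZR (sumN G mn))).
    2:{ rewrite HK, !mult_IZR. field. apply IZR_neq. lia. }
    rewrite Rabs_mult. fold rr.
    apply Rle_lt_trans with (rr * (C * del)); [|exact Hd4].
    apply Rmult_le_compat_l; auto. lra.
Qed.

Theorem lemma3p3 (w : nat -> R) (k : nat) (a : nat -> Z) :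
  rep_prop w ->
  (1 <= k)%nat ->
  Z.abs (a k) = 1%Z ->
  (forall n : nat, (k <= n)%nat ->
     w n + sum_f_R0 (fun i => IZR (a (S i)) * w (n - S i)%nat) (k - 1) = 0) ->
  forall r : Q,
    rep_prop (fun n => Q2R r * w n) /\
    joint_rep_prop (cons (fun n => Q2R r * w n) (cons w nil)).
Proof.
  intros Hw Hk Ha Hrec r.
  pose proof (key w k a (Qnum r) (Qden r) Hw Hk Ha Hrec) as K.
  assert (Hr : rep_prop (fun n => Q2R r * w n)).
  { intros eps R0 He HR. destruct (K eps R0 He HR) as [q [Hq H]].
    exists q. split; auto. intros n Hn. exact (proj2 (H n Hn)). }
  split; auto. split.
  - intros w' [<-|[<-|[]]]; auto.
  - intros G HG eps R0 He HR. destruct (K eps R0 He HR) as [q [Hq H]].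
    exists q. split; auto. intros w' Hw' n Hn.
    destruct (HG w' Hw') as [<-|[<-|[]]].
    + exact (proj2 (H n Hn)).
    + exact (proj1 (H n Hn)).
Qed.
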